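(* Let $\omega\in N\check C^n(X\times E)$ be a non-flat differential $n$-cochain on a product cover and $\eta=\check d\omega$. For multi-indices $(a)=(a_1,\dots,a_r)$ and $(b)=(b_1,\dots,b_k)$, $$T^{(a)}_{(b)}\eta=(-1)^{|(a)|+|(b)|+1}\,d\,T^{(a)}_{(b)}\omega+(-1)^{|(b)|+1}[\delta_aT^{(\cdot)}_{(b)}\omega]^{(a)}+[\delta_bT^{(a)}_{(\cdot)}\omega]_{(b)},$$ where the second term is absent if $|(a)|=1$ and the third term is absent if $|(b)|=1$.
   Context: $X,E$ are closed smooth manifolds with open covers $(U_a)_{a\in\mathcal A}$ and $(U_b)_{b\in\mathcal B}$; the product cover of $X\times E$ consists of $U_{(ab)}=U_a\times U_b$. A non-flat differential $n$-cochain on it is $(H,\omega^n_{(a_1b_1)},\omega^{n-1}_{(a_1b_1)(a_2b_2)},\dots,\omega^{-1}_{(a_1b_1)\dots(a_{n+2}b_{n+2})})$, $H$ a global $(n+1)$-form, $\omega^s$ local $s$-forms ($s\ge0$) on intersections of $n+1-s$ product sets, $\omega^{-1}$ locally constant $2\pi\mathbb Z$-valued; components with repeated index vanish. $\check d=\delta+(-1)^{r+1}d$ on Čech degree $r$ (with $\delta$ the Čech coboundary, $d$ exterior derivative), the top component of $\check d(H,\omega)$ being $H|-d\omega^n$. For $(a)=(a_1..a_r)$, $(b)=(b_1..b_k)$, define the local $(n+2-r-k)$-form $T^{(a)}_{(b)}\omega=\sum_{\gamma\in\mathcal D}(-1)^{A(\gamma)}\omega^{n+2-k-r}_\gamma$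 on $(U_{a_1}\cap\dots\cap U_{a_r})\times(U_{b_1}\cap\dots\cap U_{b_k})$, where $\mathcal D$ is the set of lattice paths $\gamma=((a_{p_1}b_{q_1}),\dots,(a_{p_{r+k-1}}b_{q_{r+k-1}}))$ in the grid $\{(a_pb_q)\}$ from $(a_1b_1)$ to $(a_rb_k)$ moving only right or upward, $A(\gamma)$ is the area between $\gamma$ and the $b$-axis, and $\omega_\gamma=\omega_{(a_{p_1}b_{q_1})\dots(a_{p_{r+k-1}}b_{q_{r+k-1}})}$. $\delta_a$ (resp. $\delta_b$) denotes the Čech coboundary in the first (resp. second) multi-index, e.g. $[\delta_bT^{(a)}_{(\cdot)}\omega]_{(b)}=\sum_{j}(-1)^{j+1}T^{(a)}_{(b_1..\hat b_j..b_k)}\omega$. *)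

(* Defs.v *)
From HB Require Import structures.
From mathcomp Require Import all_boot all_order all_algebra.
Set Implicit Arguments. Unset Strict Implicit. Unset Printing Implicit Defensive.
Import Order.TTheory GRing.Theory Num.Theory.
Local Open Scope ring_scope.

(* Abstract model of the sheaf of (total) differential forms on the finite   *)
(* intersections of a cover indexed by I.  A sequence S : seq I stands for   *)
(* the open set U_S = \bigcap_{i in S} U_i (U_[::] is the whole space).      *)
(*   Om S   = forms (of all degrees, incl. the locally constant 2piZ-valued  *)
(*            "degree -1" functions) on U_S;                                 *)
(*   res S S' = restriction Om S -> Om S' (meaningful when S \subset S',     *)
(*            i.e. U_S' \subset U_S; only used in that case);               *)
(*   d S    = exterior derivative (d : Om^{-1} -> Om^0 is the inclusion).    *)
Definition subseqset (I : eqType) (S S' : seq I) : bool :=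
  all (fun i => i \in S') S.

Record FormSys (I : eqType) := {
  Om : seq I -> zmodType;
  res : forall S S' : seq I, {additive Om S -> Om S'};
  dext : forall S : seq I, {additive Om S -> Om S};
  res_id : forall S (x : Om S), res S S x = x;
  res_comp : forall S S' S'' (x : Om S), subseqset S S' -> subseqset S' S'' ->
     res S' S'' (res S S' x) = res S S'' x;
  dext_res : forall S S' (x : Om S), subseqset S S' ->
     dext S' (res S S' x) = res S S' (dext S x);
  dext_dext : forall S (x : Om S), dext S (dext S x) = 0
}.

Section Cech.
Variables (I : eqType) (F : FormSys I).

(* the component at [::] is the global form H.                              *)
Definition cochain := forall S : seq I, Om F S.

Definition rem_at (T : Type) (j : nat) (s : seq T) : seq T :=
  take j s ++ drop j.+1 s.

(* non-flat differential n-cochain: H = w [::] is global, w_S has form degree *)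
(* n+1-|S|; components with |S| > n+2 (form degree < -1) do not exist (= 0) *)
(* and components with a repeated index vanish.                             *)
Definition is_diff_cochain (n : nat) (w : cochain) : Prop :=
  (forall S, ~~ uniq S -> w S = 0) /\ (forall S, (n.+2 < size S)%N -> w S = 0).

(* check d = delta + (-1)^(r+1) d on Cech degree r = |S|-1 *)
Definition dcheck (w : cochain) : cochain := fun S =>
  \sum_(j < size S) (res F (rem_at j S) S (w (rem_at j S)) *~ ((-1) ^+ j))
  + dext F S (w S) *~ ((-1) ^+ size S).

End Cech.

Section Paths.
Variables (A B : eqType).

(* lattice path given by its steps: true = up (next a), false = right (next b) *)
Fixpoint walk (st : seq bool) (a : seq A) (b : seq B) : seq (A * B) :=
  match a, b with
  | x :: a', y :: b' =>
      (x, y) :: match st with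
                | [::] => [::]
                | s :: st' => if s then walk st' a' b else walk st' a b'
                end
  | _, _ => [::]
  end.

(* area between the path and the b-axis (b horizontal, a vertical) *)
Fixpoint parea (h : nat) (st : seq bool) : nat :=
  match st with
  | [::] => 0
  | s :: st' => if s then parea h.+1 st' else h + parea h st'
  end.

Definition grid (a : seq A) (b : seq B) : seq (A * B) :=
  [seq (x, y) | x <- a, y <- b].

Variable F : FormSys (A * B)%type.

(* T^{(a)}_{(b)} w, a form on (U_{a_1}..U_{a_r}) x (U_{b_1}..U_{b_k}) = U_grid *)
Definition Tab (w : cochain F) (a : seq A) (b : seq B) : Om F (grid a b) :=
  \sum_(st : ((size a).-1 + (size b).-1).-tuple bool | (count id st == (size a).-1)%N)
     (res F (walk st a b) (grid a b) (w (walk st a b)) *~ ((-1) ^+ parea 0 st)).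

Definition deltaA (w : cochain F) (a : seq A) (b : seq B) : Om F (grid a b) :=
  \sum_(j < size a)
     (res F (grid (rem_at j a) b) (grid a b) (Tab w (rem_at j a) b) *~ ((-1) ^+ j)).

Definition deltaB (w : cochain F) (a : seq A) (b : seq B) : Om F (grid a b) :=
  \sum_(j < size b)
     (res F (grid a (rem_at j b)) (grid a b) (Tab w a (rem_at j b)) *~ ((-1) ^+ j)).

End Paths.

(* Main.v *)
Require Import Defs.
From HB Require Import structures.
From mathcomp Require Import all_boot all_order all_algebra.
From mathcomp Require Import zify ring.
Set Implicit Arguments. Unset Strict Implicit. Unset Printing Implicit Defensive.
Import GRing.Theory.
Local Open Scope ring_scope.


Fixpoint blists (n : nat) : seq (seq bool) :=
  if n is n'.+1 then [seq true :: s | s <- blists n'] ++ [seq false :: s | s <- blists n']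
  else [:: [::]].

Lemma cons_inj (c : bool) : injective (cons c).
Proof. by move=> ?? []. Qed.

Lemma mem_cons_map (c c' : bool) s (l : seq (seq bool)) :
  (c :: s \in [seq c' :: t | t <- l]) = (c == c') && (s \in l).
Proof.
apply/idP/idP.
- by move=> /mapP [t Ht [-> ->]]; rewrite eqxx.
- by move=> /andP [/eqP -> Hs]; apply/mapP; exists s.
Qed.

Lemma mem_blists n s : (s \in blists n) = (size s == n).
Proof.
elim: n s => [|n IH] [|c s] //=.
- by rewrite mem_cat; apply/negbTE; rewrite negb_or; apply/andP; split; apply/mapP => -[].
- by rewrite mem_cat eqSS -IH !mem_cons_map; case: c; rewrite ?orbF.
Qed.

Lemma uniq_blists n : uniq (blists n).
Proof.
elim: n => //= n IH; rewrite cat_uniq. rewrite !map_inj_uniq //; try exact: cons_inj. rewrite IH /=.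
rewrite andbT; apply/hasPn => s /mapP [s' _ ->]. by rewrite mem_cons_map.
Qed.

Lemma sum_tuple (M : zmodType) n (P : pred (seq bool)) (G : seq bool -> M) :
  \sum_(t : n.-tuple bool | P t) G t = \sum_(s <- blists n | P s) G s.
Proof.
rewrite -(big_map (@tval n bool) P G).
apply: perm_big; apply: uniq_perm.
- by rewrite map_inj_uniq ?index_enum_uniq //; apply: val_inj.
- exact: uniq_blists.
move=> s; rewrite mem_blists; apply/mapP/idP.
- by move=> [t _ ->]; rewrite size_tuple.
- by move=> /eqP H; exists (Tuple (introT eqP H)); rewrite ?mem_index_enum.
Qed.


Section Aux.
Variables (A B : eqType).

Fixpoint TT (M : zmodType) (a : seq A) : (seq (A * B) -> M) -> seq B -> M :=
  match a with
  | [::] => fun phi _ => phi [::]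
  | x :: a' => fix TTb phi b := match b with
     | [::] => phi [::]
     | y :: b' =>
       (if (size a' == 0)%N && (size b' == 0)%N then phi [:: (x, y)] else 0)
       + (if (0 < size a')%N then TT a' (fun S => phi ((x, y) :: S)) (y :: b') *~ ((-1) ^+ size b') else 0)
       + (if (0 < size b')%N then TTb (fun S => phi ((x, y) :: S)) b' else 0)
     end
  end.

Lemma TT_cons (M : zmodType) x a' y b' (phi : seq (A * B) -> M) :
  TT (x :: a') phi (y :: b') =
       (if (size a' == 0)%N && (size b' == 0)%N then phi [:: (x, y)] else 0)
       + (if (0 < size a')%N then TT a' (fun S => phi ((x, y) :: S)) (y :: b') *~ ((-1) ^+ size b') else 0)
       + (if (0 < size b')%N then TT (x :: a') (fun S => phi ((x, y) :: S)) b' else 0).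
Proof. by []. Qed.

Lemma sum_blistsS (M : zmodType) m (P : pred (seq bool)) (G : seq bool -> M) :
  \sum_(s <- blists m.+1 | P s) G s =
  \sum_(s <- blists m | P (true :: s)) G (true :: s) +
  \sum_(s <- blists m | P (false :: s)) G (false :: s).
Proof. by rewrite [blists _]/= big_cat !big_map. Qed.

Lemma sum_walk (M : zmodType) (phi : seq (A * B) -> M) a b h :
  (0 < size a)%N -> (0 < size b)%N ->
  \sum_(s <- blists ((size a).-1 + (size b).-1) | count id s == (size a).-1)
     phi (walk s a b) *~ ((-1) ^+ parea h s)
  = TT a phi b *~ ((-1) ^+ (h * (size b).-1)).
Proof.
elim: a phi b h => [|x a' IHa] phi b h // _.
elim: b phi h => [|y b' IHb] phi h // _.
rewrite TT_cons; change (size (x :: a')) with (size a').+1; change (size (y :: b')) with (size b').+1.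
rewrite !succnK.
have [E0|Epos] := posnP (size a' + size b').
  have Ea : size a' = 0%N by lia. have Eb : size b' = 0%N by lia.
  rewrite Ea Eb /= big_cons big_nil /= !addr0 muln0 expr0 mulr1z.
  by move: Ea Eb; case: (a') => // _; case: (b').
rewrite (_ : (size a' + size b' = (size a' + size b').-1.+1)%N); last by lia.
rewrite sum_blistsS.
set m := (size a' + size b').-1.
set psi := (fun S => phi ((x, y) :: S)).
have -> : \sum_(s <- blists m | count id (true :: s) == size a')
     phi (walk (true :: s) (x :: a') (y :: b')) *~ (-1) ^+ parea h (true :: s)
     = \sum_(s <- blists m | (count id s).+1 == size a')
     psi (walk s a' (y :: b')) *~ (-1) ^+ parea h.+1 s by apply: eq_big.
have -> : \sum_(s <- blists m | count id (false :: s) == size a')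
     phi (walk (false :: s) (x :: a') (y :: b')) *~ (-1) ^+ parea h (false :: s)
     = \sum_(s <- blists m | count id s == size a')
     psi (walk s (x :: a') b') *~ (-1) ^+ (h + parea h s) by apply: eq_big.
have S1 : (0 < size a')%N -> \sum_(s <- blists m | (count id s).+1 == size a')
     psi (walk s a' (y :: b')) *~ (-1) ^+ parea h.+1 s
     = TT a' psi (y :: b') *~ (-1) ^+ size b' *~ (-1) ^+ (h * size b').
  move=> Ha'; have := IHa psi (y :: b') h.+1 Ha' isT.
  change (size (y :: b')) with (size b').+1; rewrite succnK.
  rewrite (_ : ((size a').-1 + size b' = m)%N); last (by rewrite /m; lia).
  rewrite -mulrzA -exprD -mulSn => <-.
  apply: eq_bigl => s; by rewrite -{1}(prednK Ha') eqSS.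
have S1' : size a' = 0%N -> \sum_(s <- blists m | (count id s).+1 == size a')
     psi (walk s a' (y :: b')) *~ (-1) ^+ parea h.+1 s = 0
     by move=> E0; rewrite big_pred0 // => s; rewrite E0.
have S2 : (0 < size b')%N -> \sum_(s <- blists m | count id s == size a')
     psi (walk s (x :: a') b') *~ (-1) ^+ (h + parea h s) = TT (x :: a') psi b' *~ (-1) ^+ (h * size b').
  move=> Hb'; have := IHb psi h Hb'.
  change (size (x :: a')) with (size a').+1; rewrite succnK.
  rewrite (_ : (size a' + (size b').-1 = m)%N); last (by rewrite /m; lia).
  rewrite (_ : (h * size b' = h * (size b').-1 + h)%N); last (by rewrite -[in LHS](prednK Hb') mulnS addnC).
  rewrite exprD mulrzA => <-; rewrite mulrz_suml; apply: eq_bigr => s _.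
  by rewrite exprD mulrzA mulrzAC.
have S2' : size b' = 0%N -> \sum_(s <- blists m | count id s == size a')
     psi (walk s (x :: a') b') *~ (-1) ^+ (h + parea h s) = 0.
  move=> E0; rewrite big_seq_cond big_pred0 // => s; rewrite mem_blists.
  case: eqP => // Hs /=; apply/eqP.
  have := count_size id s; rewrite Hs /m E0; lia.
have [Ea|Ea] := posnP (size a'); have [Eb|Eb] := posnP (size b').
- by exfalso; lia.
- by rewrite S1' // S2 //= !add0r.
- by rewrite S1 // S2' //= add0r !addr0.
- by rewrite S1 // S2 //= add0r mulrzDl.
Qed.
End Aux.


Section Lin.
Variables (A B : eqType).

Lemma if_add (M : zmodType) (c : bool) (u v : M) :
  (if c then u + v else 0) = (if c then u else 0) + (if c then v else 0).
Proof. by case: c; rewrite ?addr0. Qed.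

Lemma if_opp (M : zmodType) (c : bool) (u : M) :
  (if c then - u else 0) = - (if c then u else 0).
Proof. by case: c; rewrite ?oppr0. Qed.

Lemma TT_add (M : zmodType) (a : seq A) (b : seq B) (phi1 phi2 : seq (A * B) -> M) :
  TT a (fun S => phi1 S + phi2 S) b = TT a phi1 b + TT a phi2 b.
Proof.
elim: a phi1 phi2 b => [|x a IHa] phi1 phi2 b; first by [].
elim: b phi1 phi2 => [|y b IHb] phi1 phi2; first by [].
rewrite !TT_cons (IHa (fun S => phi1 ((x, y) :: S)) (fun S => phi2 ((x, y) :: S)))
  (IHb (fun S => phi1 ((x, y) :: S)) (fun S => phi2 ((x, y) :: S))) mulrzDl !if_add.
set U1 := (if _ then phi1 _ else 0); set U2 := (if _ then phi2 _ else 0).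
set V1 := (if _ then _ *~ _ else 0); set V2 := (if _ then _ *~ _ else 0).
set W1 := (if _ then TT _ _ _ else 0); set W2 := (if _ then TT _ _ _ else 0).
by rewrite (addrACA U1) [LHS]addrACA.
Qed.

Lemma TT_opp (M : zmodType) (a : seq A) (b : seq B) (phi : seq (A * B) -> M) :
  TT a (fun S => - phi S) b = - TT a phi b.
Proof.
elim: a phi b => [|x a IHa] phi b; first by [].
elim: b phi => [|y b IHb] phi; first by [].
rewrite !TT_cons (IHa (fun S => phi ((x, y) :: S))) (IHb (fun S => phi ((x, y) :: S))).
by rewrite mulNrz !if_opp !opprD.
Qed.

Lemma TT_sub (M : zmodType) (a : seq A) (b : seq B) (phi1 phi2 : seq (A * B) -> M) :
  TT a (fun S => phi1 S - phi2 S) b = TT a phi1 b - TT a phi2 b.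
Proof. by rewrite TT_add TT_opp. Qed.

Lemma TT_morph (M N : zmodType) (f : {additive M -> N}) (a : seq A) (b : seq B) (phi : seq (A * B) -> M) :
  TT a (fun S => f (phi S)) b = f (TT a phi b).
Proof.
elim: a phi b => [|x a IHa] phi b; first by [].
elim: b phi => [|y b IHb] phi; first by [].
rewrite !TT_cons (IHa (fun S => phi ((x, y) :: S))) (IHb (fun S => phi ((x, y) :: S))).
rewrite !raddfD -!raddfMz.
congr (_ + _ + _); by [case: (_ && _); rewrite ?raddf0 | case: (0 < _)%N; rewrite ?raddf0].
Qed.

Lemma TT_eq (M : zmodType) (a : seq A) (b : seq B) (phi1 phi2 : seq (A * B) -> M) :
  (forall S, phi1 S = phi2 S) -> TT a phi1 b = TT a phi2 b.
Proof.
elim: a phi1 phi2 b => [|x a IHa] phi1 phi2 b H; first exact: H.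
elim: b phi1 phi2 H => [|y b IHb] phi1 phi2 H; first exact: H.
rewrite !TT_cons H (IHa (fun S => phi1 ((x, y) :: S)) (fun S => phi2 ((x, y) :: S)))
  ?(IHb (fun S => phi1 ((x, y) :: S)) (fun S => phi2 ((x, y) :: S))) //.
Qed.

Lemma mem_grid (a : seq A) (b : seq B) p : (p \in grid a b) = (p.1 \in a) && (p.2 \in b).
Proof.
apply/allpairsP/andP => [[q [Hq1 Hq2 ->]]|[H1 H2]] //.
by exists p; case: p H1 H2.
Qed.

Lemma TT_ext (M : zmodType) (a : seq A) (b : seq B) (phi1 phi2 : seq (A * B) -> M) :
  (0 < size a)%N -> (0 < size b)%N ->
  (forall S, subseqset S (grid a b) -> size S = ((size a + size b).-1)%N -> phi1 S = phi2 S) ->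
  TT a phi1 b = TT a phi2 b.
Proof.
elim: a phi1 phi2 b => [|x a IHa] phi1 phi2 b // _.
elim: b phi1 phi2 => [|y b IHb] phi1 phi2 // _ H.
have Hxy : (x, y) \in grid (x :: a) (y :: b) by rewrite mem_grid !mem_head.
rewrite !TT_cons; congr (_ + _ + _).
- case: ifP => // /andP [/eqP Ea /eqP Eb]; apply: H; first by rewrite /subseqset /= Hxy.
  by rewrite /= Ea Eb.
- case: ifP => // Ha; congr (_ *~ _); apply: IHa => // S HS HsS; apply: H.
  + rewrite /subseqset /= Hxy /=; apply/allP => p /(allP HS); rewrite !mem_grid.
    by case/andP => H1 H2; apply/andP; split => //; rewrite inE H1 orbT.
  + by rewrite /= HsS /=; lia.
- case: ifP => // Hb; apply: IHb => // S HS HsS; apply: H.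
  + rewrite /subseqset /= Hxy /=; apply/allP => p /(allP HS); rewrite !mem_grid.
    by case/andP => H1 H2; apply/andP; split => //; rewrite inE H2 orbT.
  + by rewrite /= HsS /=; lia.
Qed.

End Lin.


Section SqZero.
Variable M : zmodType.
Definition sqz : Type := (int * M)%type.
HB.instance Definition _ := GRing.Zmodule.on sqz.

Definition sqz_one : sqz := (1, 0).
Definition sqz_mul (u v : sqz) : sqz := (u.1 * v.1, u.2 *~ v.1 + v.2 *~ u.1).

Lemma sqz_mulA : associative sqz_mul.
Proof.
move=> [a x] [b y] [c z]; rewrite /sqz_mul /=; congr (_, _); first by rewrite mulrA.
rewrite !mulrzDl -!mulrzA addrA; congr (_ + _ + _); by rewrite mulrC.
Qed.
Lemma sqz_mulC : commutative sqz_mul.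
Proof. by move=> [a x] [b y]; rewrite /sqz_mul /= mulrC addrC. Qed.
Lemma sqz_mul1 : left_id sqz_one sqz_mul.
Proof. by move=> [b y]; rewrite /sqz_mul /= mul1r mul0rz add0r mulr1z. Qed.
Lemma sqz_mulDl : left_distributive sqz_mul +%R.
Proof.
move=> [a x] [b y] [c z]; rewrite /sqz_mul /=; congr (_, _); first by rewrite mulrDl.
by rewrite mulrzDl mulrzDr addrACA.
Qed.
Lemma sqz_one_neq0 : sqz_one != 0.
Proof. by apply/negP => /eqP [] /eqP. Qed.

HB.instance Definition _ := GRing.Zmodule_isComNzRing.Build sqz
  sqz_mulA sqz_mulC sqz_mul1 sqz_mulDl sqz_one_neq0.

Definition sqz_in (x : M) : sqz := (0, x).
Lemma sqz_in_is_additive : zmod_morphism sqz_in.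
Proof. by move=> x y. Qed.
HB.instance Definition _ := GRing.isZmodMorphism.Build M sqz sqz_in sqz_in_is_additive.
Lemma sqz_in_inj : injective sqz_in.
Proof. by move=> x y []. Qed.
End SqZero.

Ltac zmod_ring := apply: sqz_in_inj; rewrite ?raddfD; ring.


Lemma rem_at0 (T : Type) (x : T) s : rem_at 0 (x :: s) = s.
Proof. by rewrite /rem_at /= drop0. Qed.
Lemma rem_atS (T : Type) (x : T) s i : rem_at i.+1 (x :: s) = x :: rem_at i s.
Proof. by []. Qed.
Lemma size_rem_at (T : Type) i (s : seq T) : (i < size s)%N -> size (rem_at i s) = (size s).-1.
Proof. move=> H; rewrite /rem_at size_cat size_take size_drop H; lia. Qed.
Lemma subseqset_rem_at (T : eqType) i (s : seq T) : subseqset (rem_at i s) s.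
Proof.
apply/allP => z; rewrite /rem_at mem_cat => /orP [/mem_take|/mem_drop] //.
Qed.

Arguments TT : simpl never.

Section Main.
Variables (A B : eqType).
Implicit Types (M : zmodType).

Definition del M (phi : seq (A * B) -> M) (S : seq (A * B)) : M :=
  \sum_(j < size S) phi (rem_at j S) *~ ((-1) ^+ j).
Definition alpha M (phi : seq (A * B) -> M) (a : seq A) (b : seq B) : M :=
  \sum_(i < size a) TT (rem_at i a) phi b *~ ((-1) ^+ i).
Definition beta M (phi : seq (A * B) -> M) (a : seq A) (b : seq B) : M :=
  \sum_(j < size b) TT a phi (rem_at j b) *~ ((-1) ^+ j).
Definition sA M (phi : seq (A * B) -> M) x (a' : seq A) (b : seq B) : M :=
  \sum_(i < size a') TT (x :: rem_at i a') phi b *~ ((-1) ^+ i).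
Definition sB M (phi : seq (A * B) -> M) (a : seq A) y (b' : seq B) : M :=
  \sum_(j < size b') TT a phi (y :: rem_at j b') *~ ((-1) ^+ j).

Lemma del_nil M (phi : seq (A * B) -> M) : del phi [::] = 0.
Proof. by rewrite /del big_ord0. Qed.

Lemma del_cons M (phi : seq (A * B) -> M) p S :
  del phi (p :: S) = phi S - del (fun S => phi (p :: S)) S.
Proof.
rewrite /del big_ord_recl /= rem_at0 expr0 mulr1z; congr (_ + _).
rewrite -sumrN; apply: eq_bigr => i _.
by rewrite /bump /= add1n rem_atS exprS mulN1r mulrNz.
Qed.

Lemma alpha_cons M (phi : seq (A * B) -> M) x a' b :
  alpha phi (x :: a') b = TT a' phi b - sA phi x a' b.
Proof.
rewrite /alpha /sA big_ord_recl rem_at0 expr0 mulr1z; congr (_ + _).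
rewrite -sumrN; apply: eq_bigr => i _.
by rewrite lift0 rem_atS exprS mulN1r mulrNz.
Qed.

Lemma beta_cons M (phi : seq (A * B) -> M) a y b' :
  beta phi a (y :: b') = TT a phi b' - sB phi a y b'.
Proof.
rewrite /beta /sB big_ord_recl rem_at0 expr0 mulr1z; congr (_ + _).
rewrite -sumrN; apply: eq_bigr => i _.
by rewrite lift0 rem_atS exprS mulN1r mulrNz.
Qed.

Lemma sA_step M (phi : seq (A * B) -> M) x a' y b' :
  sA phi x a' (y :: b') =
    (if (1 < size a')%N then alpha (fun S => phi ((x, y) :: S)) a' (y :: b') *~ ((-1) ^+ size b') else 0)
  + (if (0 < size b')%N then sA (fun S => phi ((x, y) :: S)) x a' b' else 0)
  + (if (size a' == 1)%N && (size b' == 0)%N then phi [:: (x, y)] else 0).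
Proof.
rewrite /sA; case: a' => [|z [|z' a'']].
- rewrite big_ord0; case: (0 < size b')%N; rewrite ?big_ord0 //= !addr0 //.
- rewrite big_ord1 rem_at0 expr0 mulr1z TT_cons.
  change (size [:: z]) with 1%N; change (size (@nil A)) with 0%N.
  rewrite big_ord1 rem_at0 expr0 mulr1z /= add0r addr0 addrC.
  by case: (size b').
- under eq_bigr => i _ do rewrite TT_cons (size_rem_at (ltn_ord i)).
  change (size [:: z, z' & a'']) with (size a'').+2.
  rewrite /= addr0.
  under eq_bigr => i _ do rewrite add0r mulrzDl mulrzAC.
  rewrite big_split /= -mulrz_suml; congr (_ + _).
  case: (0 < size b')%N => //; rewrite big1 // => i _; exact: mul0rz.
Qed.

Lemma sB_step M (phi : seq (A * B) -> M) x a' y b' :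
  sB phi (x :: a') y b' =
    (if (0 < size a')%N then sB (fun S => phi ((x, y) :: S)) a' y b' *~ ((-1) ^+ (size b').-1) else 0)
  + (if (1 < size b')%N then beta (fun S => phi ((x, y) :: S)) (x :: a') b' else 0)
  + (if (size a' == 0)%N && (size b' == 1)%N then phi [:: (x, y)] else 0).
Proof.
rewrite /sB; case: b' => [|w [|w' b'']].
- rewrite big_ord0; case: (0 < size a')%N; rewrite ?big_ord0 ?mul0rz //= andbF !addr0 //.
  rewrite big_ord1 rem_at0 expr0 mulr1z TT_cons.
  change (size [:: w]) with 1%N; change (size (@nil B)) with 0%N.
  rewrite big_ord1 rem_at0 expr0 mulr1z /= !addr0.
  by rewrite addrC.
- under eq_bigr => i _ do rewrite TT_cons (size_rem_at (ltn_ord i)).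
  change (size [:: w, w' & b'']) with (size b'').+2.
  rewrite /= andbF addr0.
  under eq_bigr => i _ do rewrite add0r mulrzDl.
  rewrite big_split /=; congr (_ + _).
  case: (0 < size a')%N; last by rewrite big1 // => i _; exact: mul0rz.
  by rewrite mulrz_suml; apply: eq_bigr => i _; rewrite mulrzAC.
Qed.

Lemma TT_del M (phi : seq (A * B) -> M) a b :
  (0 < size a)%N -> (0 < size b)%N ->
  TT a (del phi) b =
    (if (1 < size a)%N then alpha phi a b *~ ((-1) ^+ (size b).+1) else 0)
  + (if (1 < size b)%N then beta phi a b else 0)
  + (if (size a == 1)%N && (size b == 1)%N then phi [::] else 0).
Proof.
elim: a phi b => [|x a' IHa] phi b // _.
elim: b phi => [|y b' IHb] phi // _.
have IH1 := fun H => IHa (fun S => phi ((x, y) :: S)) (y :: b') H isT.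
have IH2 := fun H => IHb (fun S => phi ((x, y) :: S)) H.
rewrite TT_cons.
rewrite (@TT_eq _ _ _ a' (y :: b') (fun S => del phi ((x, y) :: S))
   (fun S => phi S - del (fun S => phi ((x, y) :: S)) S)); last by move=> S; rewrite del_cons.
rewrite (@TT_eq _ _ _ (x :: a') b' (fun S => del phi ((x, y) :: S))
   (fun S => phi S - del (fun S => phi ((x, y) :: S)) S)); last by move=> S; rewrite del_cons.
rewrite !TT_sub del_cons del_nil subr0.
rewrite alpha_cons beta_cons sA_step sB_step.
have HsA : sA (fun S => phi ((x, y) :: S)) x a' b' =
   TT a' (fun S => phi ((x, y) :: S)) b' - alpha (fun S => phi ((x, y) :: S)) (x :: a') b'.
  by rewrite alpha_cons opprB addrC subrK.
have HsB : sB (fun S => phi ((x, y) :: S)) a' y b' =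
   TT a' (fun S => phi ((x, y) :: S)) b' - beta (fun S => phi ((x, y) :: S)) a' (y :: b').
  by rewrite beta_cons opprB addrC subrK.
rewrite HsA HsB.
change (size (x :: a')) with (size a').+1 in IH2 |- *.
change (size (y :: b')) with (size b').+1 in IH1 |- *.
change ((fun S => phi ((x, y) :: S)) [::]) with (phi [:: (x, y)]) in IH1, IH2.
move: IH1 IH2.
case: (size a') => [|[|k]]; case: (size b') => [|[|l]] IH1 IH2.
all: rewrite /= ?IH1 ?IH2 //=.
all: rewrite ?exprS ?expr0.
all: try (rewrite -(signr_odd _ l); case: (odd l)).
all: rewrite ?expr0 ?expr1.
all: apply: sqz_in_inj; ring.
Qed.

End Main.


Lemma TT_mulz (A B : eqType) (M : zmodType) (a : seq A) (b : seq B) (phi : seq (A * B) -> M) c :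
  TT a (fun S => phi S *~ c) b = TT a phi b *~ c.
Proof.
elim: a phi b => [|x a IHa] phi b; first by [].
elim: b phi => [|y b IHb] phi; first by [].
rewrite !TT_cons (IHa (fun S => phi ((x, y) :: S))) (IHb (fun S => phi ((x, y) :: S))).
rewrite !mulrzDl mulrzAC; congr (_ + _ + _); by case: ifP; rewrite ?mul0rz.
Qed.

Lemma Tab_TT (A B : eqType) (F : FormSys (A * B)%type) (v : cochain F) a b :
  (0 < size a)%N -> (0 < size b)%N ->
  Tab v a b = TT a (fun S => res F S (grid a b) (v S)) b.
Proof.
move=> Ha Hb; rewrite /Tab.
rewrite (@sum_tuple _ _ (fun s => count id s == (size a).-1)
   (fun s => res F (walk s a b) (grid a b) (v (walk s a b)) *~ ((-1) ^+ parea 0 s))).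
by rewrite (sum_walk (fun S => res F S (grid a b) (v S)) 0 Ha Hb) mul0n expr0 mulr1z.
Qed.

Lemma subseqset_grid (A B : eqType) i (a : seq A) (b : seq B) :
  subseqset (grid (rem_at i a) b) (grid a b).
Proof.
apply/allP => p; rewrite !mem_grid => /andP [H1 H2]; rewrite H2 andbT.
exact: (allP (subseqset_rem_at i a)).
Qed.

Lemma subseqset_gridr (A B : eqType) j (a : seq A) (b : seq B) :
  subseqset (grid a (rem_at j b)) (grid a b).
Proof.
apply/allP => p; rewrite !mem_grid => /andP [H1 H2]; rewrite H1 /=.
exact: (allP (subseqset_rem_at j b)).
Qed.

Unset Implicit Arguments. Set Strict Implicit.

Theorem mainTheorem12 (A B : eqType) (F : FormSys (A * B)%type) (n : nat)
  (w : cochain F) (Hw : is_diff_cochain n w)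
  (a : seq A) (b : seq B) (Ha : (0 < size a)%N) (Hb : (0 < size b)%N)
  (Hab : (2 < size a + size b)%N) :
  Tab (dcheck w) a b =
    dext F _ (Tab w a b) *~ ((-1) ^+ (size a + size b + 1))
    + (if (1 < size a)%N then deltaA w a b *~ ((-1) ^+ (size b + 1)) else 0)
    + (if (1 < size b)%N then deltaB w a b else 0).
Proof.
set G := grid a b.
set phi0 := fun S => res F S G (w S).
rewrite !Tab_TT //.
rewrite (@TT_ext _ _ _ a b _ (fun S => del phi0 S + dext F G (phi0 S) *~ ((-1) ^+ (size a + size b).-1)) Ha Hb); last first.
  move=> S HS HsS; rewrite /dcheck raddfD raddf_sum raddfMz /del /phi0; congr (_ + _).
  - apply: eq_bigr => j _; rewrite raddfMz res_comp //; exact: subseqset_rem_at.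
  - by rewrite dext_res // HsS.
rewrite TT_add TT_mulz TT_del // (TT_morph (dext F G)).
have -> : (size a == 1)%N && (size b == 1)%N = false by apply/negbTE; lia.
have -> : ((-1) ^+ (size a + size b).-1 = (-1) ^+ (size a + size b + 1) :> int).
  rewrite (_ : (size a + size b + 1 = (size a + size b).-1 + 2)%N); last by lia.
  by rewrite exprD expr2 mulrNN mulr1.
have Hal : (1 < size a)%N -> alpha phi0 a b = deltaA w a b.
  move=> H1; rewrite /alpha /deltaA; apply: eq_bigr => i _; congr (_ *~ _).
  have Hi : (0 < size (rem_at i a))%N by rewrite size_rem_at //; lia.
  rewrite Tab_TT // -(TT_morph (res F (grid (rem_at i a) b) G)).
  apply: TT_ext => // S HS _; rewrite /phi0 res_comp //; exact: subseqset_grid.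
have Hbe : (1 < size b)%N -> beta phi0 a b = deltaB w a b.
  move=> H1; rewrite /beta /deltaB; apply: eq_bigr => i _; congr (_ *~ _).
  have Hi : (0 < size (rem_at i b))%N by rewrite size_rem_at //; lia.
  rewrite Tab_TT // -(TT_morph (res F (grid a (rem_at i b)) G)).
  apply: TT_ext => // S HS _; rewrite /phi0 res_comp //; exact: subseqset_gridr.
rewrite !addn1 addr0 /phi0 /G.
case: ifP => [H1|_]; [rewrite Hal // | ]; case: ifP => [H2|_]; rewrite ?Hbe //.
all: apply: sqz_in_inj; ring.
Qed.
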